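(* Let $K\subset L$ be a finite extension of non-archimedean local fields with rings of integers $\mathcal{O}_K$ and $\mathcal{O}_L$, let $\pi$ be a uniformizer of $K$ and $r\in\mathbb{N}$. (i) If $T\colon\mathcal{O}_K^n\to\mathcal{O}_K^n$ is an injective $\mathcal{O}_K$-linear map, then $$|\ker T\otimes(\mathcal{O}_L/\pi^r\mathcal{O}_L)|=|\mathrm{cok}\,T\otimes(\mathcal{O}_L/\pi^r\mathcal{O}_L)|=|\ker T\otimes(\mathcal{O}_K/\pi^r\mathcal{O}_K)|^{[L:K]}=|\mathrm{cok}\,T\otimes(\mathcal{O}_K/\pi^r\mathcal{O}_K)|^{[L:K]}.$$ (ii) If $U\colon\mathcal{O}_L^n\to\mathcal{O}_L^n$ is an injective $\mathcal{O}_L$-linear map and $\Lambda=\{x\in\mathcal{O}_K^n: x\otimes1\in\mathrm{im}\,U\}$, then $$|\ker U\otimes(\mathcal{O}_L/\pi^r\mathcal{O}_L)|=|\mathrm{cok}\,U\otimes(\mathcal{O}_L/\pi^r\mathcal{O}_L)|\le|\ker(\Lambda\otimes(\mathcal{O}_K/\pi^r\mathcal{O}_K)\to(\mathcal{O}_K/\pi^r\mathcal{O}_K)^n)|^{[L:K]}=|\mathrm{cok}(\Lambda\otimes(\mathcal{O}_K/\pi^r\mathcal{O}_K)\to(\mathcal{O}_K/\pi^r\mathcal{O}_K)^n)|^{[L:K]},$$ where the last maps are induced by the inclusion $\Lambda\hookrightarrow\mathcal{O}_K^n$.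
   Context: $\mathrm{cok}$ denotes cokernel; tensor products of a map $T$ with a quotient ring mean the induced map on the corresponding free modules. *)

(* Defs.v *)
From HB Require Import structures.
From mathcomp Require Import all_boot all_order all_algebra all_field.
Set Implicit Arguments. Unset Strict Implicit. Unset Printing Implicit Defensive.
Import Order.TTheory GRing.Theory Num.Theory.
Local Open Scope ring_scope.

(* Non-archimedean local fields, via a discrete valuation v : F -> int.    *)
(* The value v 0 is irrelevant (conventionally +oo); only v on F^* is used.*)

Definition vclose {F : fieldType} (v : F -> int) (N : int) (x y : F) : Prop :=
  x = y \/ (x != y /\ N <= v (x - y)).

Definition vint {F : fieldType} (v : F -> int) (x : F) : Prop :=
  x = 0 \/ 0 <= v x.

(* F is a non-archimedean local field for the discrete valuation v:
   v is a (nontrivial, Z-valued hence discrete) valuation, F is complete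
   for it, and the residue field O/m is finite. *)
Definition local_field {F : fieldType} (v : F -> int) : Prop :=
  [/\ (forall x y : F, x != 0 -> y != 0 -> v (x * y) = v x + v y),
      (forall x y : F, x != 0 -> y != 0 -> x + y != 0 ->
          Order.min (v x) (v y) <= v (x + y)),
      (exists x : F, x != 0 /\ v x != 0),
      (forall u : nat -> F,
          (forall N : int, exists M : nat, forall m k : nat,
              (M <= m)%N -> (M <= k)%N -> vclose v N (u m) (u k)) ->
          exists l : F, forall N : int, exists M : nat, forall m : nat,
              (M <= m)%N -> vclose v N (u m) l) &
      (exists s : seq F, (forall y, y \in s -> vint v y) /\
          forall x, vint v x -> exists2 y, y \in s & vclose v 1 x y)].

Definition uniformizer {F : fieldType} (v : F -> int) (pi : F) : Prop :=
  [/\ pi != 0, 0 < v pi &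
      forall x : F, x != 0 -> 0 < v x -> v pi <= v x].

Definition vintv {F : fieldType} (v : F -> int) {n : nat} (x : 'rV[F]_n) : Prop :=
  forall i, vint v (x 0 i).
Definition vintm {F : fieldType} (v : F -> int) {m n : nat} (A : 'M[F]_(m, n))
  : Prop := forall i j, vint v (A i j).

(* |S / N| = k, where N <= S are additive subgroups of V: there are exactly
   k classes of S modulo N (given by pairwise incongruent representatives). *)
Definition quot_card {V : zmodType} (S N : V -> Prop) (k : nat) : Prop :=
  exists s : seq V,
    [/\ size s = k,
        (forall i, (i < k)%N -> S (nth 0 s i)),
        (forall i j, (i < k)%N -> (j < k)%N -> N (nth 0 s i - nth 0 s j) -> i = j) &
        (forall x, S x -> exists2 i, (i < k)%N & N (x - nth 0 s i))].

Definition multv {F : fieldType} (v : F -> int) {n : nat} (c : F) (x : 'rV[F]_n)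
  : Prop := exists2 y, vintv v y & x = c *: y.

(* For A : O^n -> O^n (x |-> x *m A) and c = pi^r, the map A (x) O/cO on
   (O/cO)^n. Its kernel is {x in O^n | x A in c O^n} / c O^n, and its
   cokernel is O^n / (O^n A + c O^n). *)
Definition redker_S {F : fieldType} (v : F -> int) {n : nat} (c : F)
  (A : 'M[F]_n) : 'rV[F]_n -> Prop :=
  fun x => vintv v x /\ multv v c (x *m A).
Definition redcok_N {F : fieldType} (v : F -> int) {n : nat} (c : F)
  (A : 'M[F]_n) : 'rV[F]_n -> Prop :=
  fun x => exists y z, [/\ vintv v y, vintv v z & x = y *m A + c *: z].

(* For an O-submodule Lam of O^n, the map Lam (x) O/cO -> (O/cO)^n induced
   by the inclusion; Lam (x) O/cO = Lam / c Lam. Its kernel is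
   (Lam /\ c O^n) / c Lam and its cokernel is O^n / (Lam + c O^n). *)
Definition subker_S {F : fieldType} (v : F -> int) {n : nat} (c : F)
  (Lam : 'rV[F]_n -> Prop) : 'rV[F]_n -> Prop :=
  fun x => Lam x /\ multv v c x.
Definition subker_N {F : fieldType} {n : nat} (c : F)
  (Lam : 'rV[F]_n -> Prop) : 'rV[F]_n -> Prop :=
  fun x => exists2 y, Lam y & x = c *: y.
Definition subcok_N {F : fieldType} (v : F -> int) {n : nat} (c : F)
  (Lam : 'rV[F]_n -> Prop) : 'rV[F]_n -> Prop :=
  fun x => exists y z, [/\ Lam y, vintv v z & x = y + c *: z].

(* Main.v *)
Require Import Defs.
From HB Require Import structures.
From mathcomp Require Import all_boot all_order all_algebra all_field.
From mathcomp Require Import boolp zify ring.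
Set Implicit Arguments. Unset Strict Implicit. Unset Printing Implicit Defensive.
Import Order.TTheory GRing.Theory Num.Theory.
Local Open Scope ring_scope.

Definition sg {V : zmodType} (P : V -> Prop) :=
  P 0 /\ (forall x y, P x -> P y -> P (x - y)).

Lemma sub4 (V : zmodType) (a b c d : V) : a + b - (c + d) - (b - d) = a - c.
Proof. by rewrite opprD opprB !addrA subrK addrAC addrK. Qed.

Section Counting.
Variable V : zmodType.
Implicit Types S N : V -> Prop.

Lemma sgN N x : sg N -> N x -> N (- x).
Proof. by case=> h0 hB hx; rewrite -sub0r; apply: hB. Qed.

Lemma sgD N x y : sg N -> N x -> N y -> N (x + y).
Proof. move=> h hx hy; rewrite -[y]opprK; apply: h.2 => //; exact: sgN. Qed.

Lemma sg_sym N x y : sg N -> N (x - y) -> N (y - x).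
Proof. by move=> h hxy; rewrite -opprB; apply: sgN. Qed.

Lemma sg_trans N x y z : sg N -> N (x - y) -> N (y - z) -> N (x - z).
Proof.
move=> h h1 h2; have := sgD h h1 h2; by rewrite addrA subrK.
Qed.

Lemma qc_pos S N k : quot_card S N k -> S 0 -> (0 < k)%N.
Proof. by case=> s [_ _ _ hc] /hc [i hi _]; apply: leq_ltn_trans hi. Qed.

Definition pw N (t : seq V) :=
  forall i j, (i < size t)%N -> (j < size t)%N -> N (nth 0 t i - nth 0 t j) -> i = j.

Lemma qc_cover S N (s : seq V) : sg N -> (forall y, y \in s -> S y) ->
  (forall x, S x -> exists2 y, y \in s & N (x - y)) -> exists k, quot_card S N k.
Proof.
move=> hN hs hcov.
have : exists t : seq V, [/\ forall y, y \in t -> S y, pw N t &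
            forall y, y \in s -> exists2 z, z \in t & N (y - z)].
  elim: s hs {hcov} => [|y s IH] hs.
    by exists [::]; split => // i j.
  have [|t [ht1 ht2 ht3]] := IH.
    by move=> z hz; apply: hs; rewrite inE hz orbT.
  case: (pselect (exists2 z, z \in t & N (y - z))) => [[z hz hyz]|hno].
    exists t; split => // w; rewrite inE => /orP [/eqP ->|]; first by exists z.
    exact: ht3.
  exists (y :: t); split.
  - move=> w; rewrite inE => /orP [/eqP ->|]; last exact: ht1.
    by apply: hs; rewrite inE eqxx.
  - move=> [|i] [|j] //= hi hj hij.
    + by exfalso; apply: hno; exists (nth 0 t j) => //; apply: mem_nth.
    + exfalso; apply: hno; exists (nth 0 t i); first exact: mem_nth.
      exact: sg_sym.
    + by congr _.+1; apply: ht2.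
  - move=> w; rewrite inE => /orP [/eqP ->|hw].
      by exists y; [rewrite inE eqxx | rewrite subrr; case: hN].
    by have [z hz hwz] := ht3 w hw; exists z => //; rewrite inE hz orbT.
case=> t [ht1 ht2 ht3]; exists (size t), t; split => //.
- by move=> i hi; apply: ht1; apply: mem_nth.
- move=> x /hcov [y /ht3 [z hz hyz] hxy].
  exists (index z t); first by rewrite index_mem.
  by rewrite nth_index //; apply: sg_trans hyz.
Qed.

Lemma qc_le S N N' a b : sg N -> (forall x, N x -> N' x) ->
  quot_card S N a -> quot_card S N' b -> (b <= a)%N.
Proof.
move=> hN hNN' [s [hs1 hs2 hs3 hs4]] [t [ht1 ht2 ht3 ht4]].
have H : forall j : 'I_b, exists i : 'I_a, N (nth 0 t j - nth 0 s i).
  move=> j; have [i hi hN1] := hs4 _ (ht2 _ (ltn_ord j)).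
  by exists (Ordinal hi).
have [g hg] := choice H.
have ginj : injective g.
  move=> j j' hjj'; apply: val_inj; apply: ht3; rewrite ?ltn_ord //.
  apply: hNN'; have := hN.2 _ _ (hg j) (hg j'); rewrite hjj'.
  by rewrite opprB addrA subrK.
by have := leq_card g ginj; rewrite !card_ord.
Qed.

Lemma qc_uniq S N a b : sg N -> quot_card S N a -> quot_card S N b -> a = b.
Proof.
move=> hN ha hb; apply/eqP; rewrite eqn_leq.
by rewrite (qc_le hN _ ha hb) // (qc_le hN _ hb ha).
Qed.

Lemma qc_mul (A B C : V -> Prop) a b : sg A -> sg B -> (forall x, C x -> B x) ->
  (forall x, B x -> A x) ->
  quot_card A B a -> quot_card B C b -> quot_card A C (a * b).
Proof.
move=> hA hB hCB hBA [u [hu1 hu2 hu3 hu4]] [w [hw1 hw2 hw3 hw4]].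
exists [seq nth 0 u (k %/ b) + nth 0 w (k %% b) | k <- iota 0 (a * b)].
have bpos : forall k, (k < a * b)%N -> (0 < b)%N.
  by move=> k; case: b {hw1 hw2 hw3 hw4} => //; rewrite muln0.
have hdiv : forall k, (k < a * b)%N -> (k %/ b < a)%N.
  by move=> k hk; rewrite ltn_divLR ?(bpos k).
have hmod : forall k, (k < a * b)%N -> (k %% b < b)%N.
  by move=> k hk; rewrite ltn_mod (bpos k).
have hnth : forall k, (k < a * b)%N -> nth 0
   [seq nth 0 u (k %/ b) + nth 0 w (k %% b) | k <- iota 0 (a * b)] k =
   nth 0 u (k %/ b) + nth 0 w (k %% b).
  by move=> k hk; rewrite (nth_map 0%N) ?size_iota // nth_iota.
split.
- by rewrite size_map size_iota.
- move=> k hk; rewrite hnth //; apply: sgD => //; first exact: hu2 (hdiv _ hk).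
  exact/hBA/hw2/hmod.
- move=> k k' hk hk'; rewrite !hnth // => hC.
  have e1 : (k %/ b = k' %/ b)%N.
    apply: hu3; [exact: hdiv | exact: hdiv |].
    have := hB.2 _ _ (hCB _ hC) (hB.2 _ _ (hw2 _ (hmod _ hk)) (hw2 _ (hmod _ hk'))).
    by rewrite sub4.
  have e2 : (k %% b = k' %% b)%N.
    by apply: hw3; [exact: hmod | exact: hmod | move: hC; rewrite e1 opprD addrACA subrr add0r].
  by rewrite (divn_eq k b) (divn_eq k' b) e1 e2.
- move=> x hx; have [i hi hxi] := hu4 _ hx.
  have [j hj hxj] := hw4 _ hxi.
  exists (i * b + j)%N.
    have : (i * b + j < i * b + b)%N by rewrite ltn_add2l.
    move/leq_trans; apply; by rewrite -mulSnr leq_mul2r hi orbT.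
  have hjb : (0 < b)%N by apply: leq_ltn_trans hj.
  have hk : (i * b + j < a * b)%N.
    have : (i * b + j < i * b + b)%N by rewrite ltn_add2l.
    move/leq_trans; apply; by rewrite -mulSnr leq_mul2r hi orbT.
  rewrite hnth // divnMDl // modnMDl (divn_small hj) (modn_small hj) addn0.
  by rewrite opprD addrA.
Qed.

Lemma qc_split (A B C : V -> Prop) n : sg A -> sg B -> sg C -> (forall x, C x -> B x) ->
  (forall x, B x -> A x) -> quot_card A C n ->
  exists a b, [/\ quot_card A B a, quot_card B C b & (a * b)%N = n].
Proof.
move=> hA hB hC hCB hBA hn.
case: (hn) => s [hs1 hs2 hs3 hs4].
have memS : forall y, y \in s -> A y.
  move=> y hy; rewrite -(nth_index 0 hy); apply: hs2.
  by rewrite -hs1 index_mem.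
have [a ha] : exists a, quot_card A B a.
  apply: (qc_cover (s := s)) => // x /hs4 [i hi hxi].
  by exists (nth 0 s i); [apply: mem_nth; rewrite hs1 | apply: hCB].
pose h (y : V) := if pselect (exists z, B z /\ C (y - z)) is left e
   then projT1 (cid e) else 0.
have hh : forall y, (exists z, B z /\ C (y - z)) -> B (h y) /\ C (y - h y).
  move=> y e; rewrite /h; case: pselect => // e'.
  by case: (cid e').
have [b hb] : exists b, quot_card B C b.
  apply: (qc_cover (s := map h s)) => //.
    move=> y /mapP [z hz ->]; rewrite /h; case: pselect => [e|_].
      by case: (cid e) => w [].
    by case: hB.
  move=> x hx; have [i hi hxi] := hs4 _ (hBA _ hx).
  have e : exists z, B z /\ C (nth 0 s i - z).
    by exists x; split => //; apply: sg_sym.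
  have [h1 h2] := hh _ e.
  exists (h (nth 0 s i)); first by apply: map_f; apply: mem_nth; rewrite hs1.
  exact: sg_trans h2.
exists a, b; split => //.
exact: qc_uniq hC (qc_mul hA hB hCB hBA ha hb) hn.
Qed.

End Counting.

Lemma qc_transfer {V W : zmodType} (f : V -> W) (S1 N1 : V -> Prop)
   (S2 N2 : W -> Prop) k : sg N2 ->
  (forall x, S1 x -> S2 (f x)) ->
  (forall y, S2 y -> exists x, S1 x /\ N2 (y - f x)) ->
  (forall x x', S1 x -> S1 x' -> (N2 (f x - f x') <-> N1 (x - x'))) ->
  quot_card S1 N1 k -> quot_card S2 N2 k.
Proof.
move=> hN h1 h2 h3 [s [hs1 hs2 hs3 hs4]].
exists (map f s); split.
- by rewrite size_map.
- by move=> i hi; rewrite (nth_map 0) ?hs1 //; apply/h1/hs2.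
- move=> i j hi hj; rewrite !(nth_map 0) ?hs1 // => hij.
  by apply: hs3 => //; apply/(h3 _ _ (hs2 _ hi) (hs2 _ hj)).
- move=> y /h2 [x [hx hyx]]; have [i hi hxi] := hs4 _ hx.
  exists i => //; rewrite (nth_map 0) ?hs1 //.
  apply: sg_trans hyx _ => //; exact/(h3 _ _ hx (hs2 _ hi)).
Qed.

Lemma qc_pair {V W : zmodType} (S1 N1 : V -> Prop) (S2 N2 : W -> Prop) a b :
  quot_card S1 N1 a -> quot_card S2 N2 b ->
  quot_card (fun p : V * W => S1 p.1 /\ S2 p.2)
            (fun p : V * W => N1 p.1 /\ N2 p.2) (a * b).
Proof.
move=> [u [hu1 hu2 hu3 hu4]] [w [hw1 hw2 hw3 hw4]].
exists [seq (nth 0 u (k %/ b), nth 0 w (k %% b)) | k <- iota 0 (a * b)].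
have bpos : forall k, (k < a * b)%N -> (0 < b)%N.
  by move=> k; case: b {hw1 hw2 hw3 hw4} => //; rewrite muln0.
have hdiv : forall k, (k < a * b)%N -> (k %/ b < a)%N.
  by move=> k hk; rewrite ltn_divLR ?(bpos k).
have hmod : forall k, (k < a * b)%N -> (k %% b < b)%N.
  by move=> k hk; rewrite ltn_mod (bpos k).
have hnth : forall k, (k < a * b)%N -> nth 0
   [seq (nth 0 u (k %/ b), nth 0 w (k %% b)) | k <- iota 0 (a * b)] k =
   (nth 0 u (k %/ b), nth 0 w (k %% b)).
  by move=> k hk; rewrite (nth_map 0%N) ?size_iota // nth_iota.
split.
- by rewrite size_map size_iota.
- by move=> k hk; rewrite hnth //=; split; [apply/hu2/hdiv | apply/hw2/hmod].
- move=> k k' hk hk'; rewrite !hnth //= => -[h1 h2].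
  have e1 := hu3 _ _ (hdiv _ hk) (hdiv _ hk') h1.
  have e2 := hw3 _ _ (hmod _ hk) (hmod _ hk') h2.
  by rewrite (divn_eq k b) (divn_eq k' b) e1 e2.
- move=> [x y] /= [hx hy]; have [i hi hxi] := hu4 _ hx.
  have [j hj hyj] := hw4 _ hy.
  have hk : (i * b + j < a * b)%N.
    have : (i * b + j < i * b + b)%N by rewrite ltn_add2l.
    move/leq_trans; apply; by rewrite -mulSnr leq_mul2r hi orbT.
  exists (i * b + j)%N => //.
  by rewrite hnth //= divnMDl ?(leq_ltn_trans _ hj) // modnMDl
    (divn_small hj) (modn_small hj) addn0.
Qed.

Lemma ffunB (V : zmodType) d (f g : {ffun 'I_d -> V}) i : (f - g) i = f i - g i.
Proof. by rewrite !ffunE. Qed.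
Lemma ffun0 (V : zmodType) d i : (0 : {ffun 'I_d -> V}) i = 0.
Proof. by rewrite !ffunE. Qed.

Lemma qc_ffun {V : zmodType} (S N : V -> Prop) m d : sg N ->
  quot_card S N m ->
  quot_card (fun g : {ffun 'I_d -> V} => forall i, S (g i))
            (fun g : {ffun 'I_d -> V} => forall i, N (g i)) (m ^ d).
Proof.
move=> hN hm; elim: d => [|d IH].
  exists [:: 0]; split => //.
  - by move=> i hi [].
  - by move=> [|i] [|j].
  - by move=> x _; exists 0%N => // -[].
rewrite expnS.
pose f (p : V * {ffun 'I_d -> V}) : {ffun 'I_d.+1 -> V} :=
  [ffun i => if unlift ord0 i is Some j then p.2 j else p.1].
have sgP : sg (fun g : {ffun 'I_d.+1 -> V} => forall i, N (g i)).
  split; first by move=> i; rewrite ffun0; case: hN.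
  by move=> x y hx hy i; rewrite ffunB; apply: hN.2.
apply: (qc_transfer (f := f)) sgP _ _ _ (qc_pair hm IH).
- move=> [x g] /= [hx hg] i; rewrite ffunE /=.
  by case: unliftP.
- move=> h hh; exists (h ord0, [ffun j => h (lift ord0 j)]); split.
    by split => [|j] /=; rewrite ?ffunE; apply: hh.
  move=> i; rewrite !ffunE /=; case: unliftP => [j ->|->]; rewrite ?ffunE subrr;
  by case: hN.
- move=> [x g] [x' g'] /= _ _; split.
    move=> H; split; first by have := H ord0; rewrite !ffunE /= unlift_none.
    move=> j; have := H (lift ord0 j); rewrite !ffunE /= liftK.
    by rewrite ?ffunB.
  move=> [H1 H2] i; rewrite !ffunE /=; case: unliftP => [j _|_] //.
  by have := H2 j; rewrite ?ffunB.
Qed.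

Set Default Proof Using "All".
Section Val.
Variables (F : fieldType) (v : F -> int).
Hypothesis vM : forall x y : F, x != 0 -> y != 0 -> v (x * y) = v x + v y.
Hypothesis vD : forall x y : F, x != 0 -> y != 0 -> x + y != 0 ->
          Order.min (v x) (v y) <= v (x + y).

Definition vge (N : int) (x : F) := x = 0 \/ N <= v x.

Lemma v1 : v 1 = 0.
Proof.
have h : v (1 * 1) = v 1 + v 1 by apply: vM; rewrite oner_neq0.
rewrite mulr1 in h; lia.
Qed.

Lemma vN1 : v (-1) = 0.
Proof.
have h : (-1 : F) != 0 by rewrite oppr_eq0 oner_neq0.
have h2 : v (-1 * -1) = v (-1) + v (-1) by apply: vM.
rewrite mulrNN mulr1 v1 in h2; lia.
Qed.

Lemma vN x : v (- x) = v x.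
Proof.
have [->|hx] := eqVneq x 0; first by rewrite oppr0.
have h : (-1 : F) != 0 by rewrite oppr_eq0 oner_neq0.
by rewrite -mulN1r vM // vN1 add0r.
Qed.

Lemma vV x : x != 0 -> v x^-1 = - v x.
Proof.
move=> hx; have h : v (x * x^-1) = v x + v x^-1 by apply: vM; rewrite ?invr_neq0.
rewrite divff // v1 in h; lia.
Qed.

Lemma vge0 N : vge N 0. Proof. by left. Qed.

Lemma vgeN N x : vge N x -> vge N (- x).
Proof. by case=> [->|h]; [left; rewrite oppr0 | right; rewrite vN]. Qed.

Lemma vgeD N x y : vge N x -> vge N y -> vge N (x + y).
Proof.
move=> [->|hx]; first by rewrite add0r.
move=> [->|hy]; first by rewrite addr0; right.
have [->|hxy] := eqVneq (x + y) 0; first by left.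
have [->|x0] := eqVneq x 0; first by rewrite add0r; right.
have [->|y0] := eqVneq y 0; first by rewrite addr0; right.
right; apply: le_trans (vD x0 y0 hxy); rewrite le_min hx hy //.
Qed.

Lemma vgeB N x y : vge N x -> vge N y -> vge N (x - y).
Proof. by move=> hx hy; apply: vgeD => //; apply: vgeN. Qed.

Lemma vgeM N M x y : vge N x -> vge M y -> vge (N + M) (x * y).
Proof.
move=> [->|hx]; first by rewrite mul0r; left.
move=> [->|hy]; first by rewrite mulr0; left.
have [->|x0] := eqVneq x 0; first by rewrite mul0r; left.
have [->|y0] := eqVneq y 0; first by rewrite mulr0; left.
by right; rewrite vM // lerD.
Qed.

Lemma vge_le N M x : M <= N -> vge N x -> vge M x.
Proof. by move=> hMN [->|h]; [left | right; apply: le_trans h]. Qed.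

Lemma vge_sum N I (r : seq I) (P : pred I) (G : I -> F) :
  (forall i, P i -> vge N (G i)) -> vge N (\sum_(i <- r | P i) G i).
Proof.
by move=> h; apply: (big_ind (vge N)) => //; [apply: vge0 | apply: vgeD].
Qed.

Lemma vge_all x : (forall N, vge N x) -> x = 0.
Proof. by move=> h; case: (h (v x + 1)) => // ; lia. Qed.

Lemma vint_vge x : vint v x <-> vge 0 x. Proof. by []. Qed.

Lemma vint1 : vge 0 1. Proof. by right; rewrite v1. Qed.

Lemma vint_exp x k : vge 0 x -> vge 0 (x ^+ k).
Proof.
move=> hx; elim: k => [|k IH]; first exact: vint1.
by rewrite exprS; have := vgeM hx IH; rewrite addr0.
Qed.

Lemma vint_mul x y : vge 0 x -> vge 0 y -> vge 0 (x * y).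
Proof. by move=> hx hy; have := vgeM hx hy; rewrite addr0. Qed.

Lemma vint_prod I (r : seq I) (P : pred I) (G : I -> F) :
  (forall i, P i -> vge 0 (G i)) -> vge 0 (\prod_(i <- r | P i) G i).
Proof.
by move=> h; apply: (big_ind (vge 0)) => //; [apply: vint1 | apply: vint_mul].
Qed.

Lemma vint_det n (A : 'M[F]_n) : (forall i j, vge 0 (A i j)) -> vge 0 (\det A).
Proof.
move=> hA; rewrite /determinant; apply: vge_sum => s _.
apply: vint_mul; first by apply: vint_exp; apply: vgeN; apply: vint1.
by apply: vint_prod => i _.
Qed.

Lemma vint_adj n (A : 'M[F]_n) : (forall i j, vge 0 (A i j)) ->
  forall i j, vge 0 (\adj A i j).
Proof.
move=> hA i j; rewrite mxE /cofactor; apply: vint_mul.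
  by apply: vint_exp; apply: vgeN; apply: vint1.
by apply: vint_det => a b; rewrite !mxE; apply: hA.
Qed.

Lemma vge_div c x : c != 0 -> vge (v c) x -> vge 0 (x / c).
Proof.
move=> c0 [->|h]; first by rewrite mul0r; left.
have [->|x0] := eqVneq x 0; first by rewrite mul0r; left.
by right; rewrite vM ?invr_neq0 // vV //; lia.
Qed.

Definition smult (c x : F) := exists2 z, vint v z & x = c * z.

Lemma sg_smult c : sg (smult c).
Proof.
split; first by exists 0; [left | rewrite mulr0].
move=> x y [z hz ->] [z' hz' ->]; exists (z - z'); last by rewrite mulrBr.
exact: vgeB.
Qed.

Lemma vec_count c q n : c != 0 -> quot_card (vint v) (smult c) q ->
  quot_card (@vintv F v n) (multv v c) (q ^ n).
Proof.
move=> c0 hq; have := qc_ffun n (sg_smult c) hq.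
apply: (qc_transfer (f := fun g : {ffun 'I_n -> F} => \row_i g i)).
- split; first by exists 0; [move=> i; rewrite mxE; left | rewrite scaler0].
  move=> x y [z hz ->] [z' hz' ->]; exists (z - z'); last by rewrite scalerBr.
  by move=> i; rewrite !mxE; apply: vgeB; [apply: hz | apply: hz'].
- by move=> g hg i; rewrite mxE.
- move=> y hy; exists [ffun i => y 0 i]; split; first by move=> i; rewrite ffunE.
  have -> : y - \row_i [ffun i => y 0 i] i = 0.
    by apply/rowP => i; rewrite !mxE ffunE subrr.
  by exists 0; [move=> i; rewrite mxE; left | rewrite scaler0].
- move=> g g' _ _; split.
    move=> [y hy e] i; exists (y 0 i); first exact: hy.
    by move/rowP: e => /(_ i); rewrite !mxE ffunB.
  move=> h; exists (c^-1 *: (\row_i g i - \row_i g' i)).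
    move=> i; rewrite !mxE; have [z hz] := h i; rewrite ffunB => ->.
    by rewrite mulrA mulVf // mul1r.
  by rewrite scalerA divff // scale1r.
Qed.

Lemma exists_unif : (exists x : F, x != 0 /\ v x != 0) -> exists pi, uniformizer v pi.
Proof.
move=> [x [x0 vx]].
have [y [y0 vy]] : exists y : F, y != 0 /\ 0 < v y.
  have [h|h] := ltP 0 (v x); first by exists x.
  exists x^-1; split; first by rewrite invr_neq0.
  rewrite vV //; lia.
suff : forall n : nat, forall y : F, y != 0 -> 0 < v y -> v y <= n%:Z ->
   exists pi, uniformizer v pi.
  move=> H; apply: (H `|v y|%N y) => //; lia.
elim=> [|n IH] z z0 vz hn; first by lia.
case: (pselect (forall w : F, w != 0 -> 0 < v w -> v z <= v w)) => hmin.
  by exists z; split.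
have [w hw] : exists w : F, ~ (w != 0 -> 0 < v w -> v z <= v w).
  by apply/existsNP.
have w0 : w != 0 by apply/negP => /eqP e; apply: hw; rewrite e eqxx.
have vw : 0 < v w by case: (ltP 0 (v w)) => // h; exfalso; apply: hw => _ h'; lia.
apply: (IH w w0 vw).
case: (leP (v z) (v w)) => h; first by exfalso; apply: hw.
lia.
Qed.

Section Unif.
Variable pi : F.
Hypothesis hpi : uniformizer v pi.

Lemma pi0 : pi != 0. Proof. by case: hpi. Qed.
Lemma vpi : 0 < v pi. Proof. by case: hpi. Qed.

Lemma vX r : v (pi ^+ r) = r%:Z * v pi.
Proof.
elim: r => [|r IH]; first by rewrite expr0 v1 mul0r.
rewrite exprS vM ?expf_neq0 ?pi0 // IH; lia.
Qed.

Lemma vge_pi r z : vge 0 z -> vge r%:Z (pi ^+ r * z).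
Proof.
move=> hz; have h1 : vge (v (pi ^+ r)) (pi ^+ r) by right.
have := vgeM h1 hz; rewrite addr0; apply: vge_le.
rewrite vX; have := vpi; nia.
Qed.

Lemma vge_unif x : vge 1 x -> vge (v pi) x.
Proof.
case=> [->|h]; first by left.
have [->|x0] := eqVneq x 0; first by left.
by right; case: hpi => _ _; apply => //; lia.
Qed.

Lemma cover_pi (R : seq F) : (forall y, y \in R -> vint v y) ->
  (forall x, vint v x -> exists2 y, y \in R & vclose v 1 x y) ->
  forall r, exists s : seq F, (forall y, y \in s -> vint v y) /\
    forall x, vint v x -> exists2 y, y \in s & smult (pi ^+ r) (x - y).
Proof.
move=> hR1 hR2; elim=> [|r [s [hs1 hs2]]].
  exists [:: 0]; split; first by move=> y; rewrite inE => /eqP ->; left.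
  by move=> x hx; exists 0; [rewrite inE | exists x; rewrite // expr0 mul1r subr0].
exists [seq a + pi * b | a <- R, b <- s]; split.
  move=> y /allpairsP [[a b] [ha hb ->]] /=; apply: vgeD; first exact: hR1.
  by apply: vint_mul; [right; apply/ltW/vpi | apply: hs1].
move=> x hx; have [a ha hxa] := hR2 x hx.
have [y hy exa] : exists2 y, vint v y & x - a = pi * y.
  have h1 : vge 1 (x - a).
    by case: hxa => [->|[_ h]]; [left; rewrite subrr | right].
  have := vge_div pi0 (vge_unif h1); move=> hy; exists ((x - a) / pi) => //.
  by rewrite mulrC divfK ?pi0.
have [b hb [z hz eyb]] := hs2 y hy.
exists (a + pi * b); first by apply/allpairsP; exists (a, b).
exists z => //; rewrite opprD addrA exa -mulrBr eyb exprS mulrA //.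
Qed.

End Unif.
Lemma vintB (x y : F) : vint v x -> vint v y -> vint v (x - y). Proof. exact: vgeB. Qed.
Lemma vintD (x y : F) : vint v x -> vint v y -> vint v (x + y). Proof. exact: vgeD. Qed.
Lemma vintN (x : F) : vint v x -> vint v (- x). Proof. exact: vgeN. Qed.
Lemma vintM (x y : F) : vint v x -> vint v y -> vint v (x * y). Proof. exact: vint_mul. Qed.
Lemma vint_sum I (r : seq I) (P : pred I) (G : I -> F) :
  (forall i, P i -> vint v (G i)) -> vint v (\sum_(i <- r | P i) G i).
Proof. exact: vge_sum. Qed.

Section Vec.
Variable n : nat.
Implicit Types x y z : 'rV[F]_n.

Lemma vintv0 : vintv v (0 : 'rV[F]_n).
Proof. by move=> i; rewrite mxE; left. Qed.

Lemma vintvB x y : vintv v x -> vintv v y -> vintv v (x - y).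
Proof. by move=> hx hy i; rewrite !mxE; apply: vintB. Qed.

Lemma vintvD x y : vintv v x -> vintv v y -> vintv v (x + y).
Proof. by move=> hx hy i; rewrite !mxE; apply: vintD. Qed.

Lemma vintvZ (c : F) x : vint v c -> vintv v x -> vintv v (c *: x).
Proof. by move=> hc hx i; rewrite !mxE; apply: vintM. Qed.

Lemma vintvM x (A : 'M[F]_n) : vintv v x -> vintm v A -> vintv v (x *m A).
Proof.
move=> hx hA i; rewrite !mxE; apply: vint_sum => j _.
by apply: vintM; [apply: hx | apply: hA].
Qed.

Lemma sg_vintv : sg (@vintv F v n).
Proof. by split; [apply: vintv0 | apply: vintvB]. Qed.

Lemma sg_multv (c : F) : sg (@multv F v n c).
Proof.
split; first by exists 0; [apply: vintv0 | rewrite scaler0].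
move=> x y [a ha ->] [b hb ->]; exists (a - b); last by rewrite scalerBr.
exact: vintvB.
Qed.

Lemma multv_vintv (c : F) x : vint v c -> multv v c x -> vintv v x.
Proof. by move=> hc [y hy ->]; apply: vintvZ. Qed.

Lemma multvM (c : F) x (A : 'M[F]_n) : vintm v A -> multv v c x -> multv v c (x *m A).
Proof. by move=> hA [y hy ->]; exists (y *m A); [apply: vintvM | rewrite scalemxAl]. Qed.

Lemma sg_redker (c : F) (A : 'M[F]_n) : sg (redker_S v c A).
Proof.
split; first by split; [apply: vintv0 | rewrite mul0mx; case: (sg_multv c)].
move=> x y [hx1 hx2] [hy1 hy2]; split; first exact: vintvB.
by rewrite mulmxBl; apply: (sg_multv c).2.
Qed.

Lemma sg_redcok (c : F) (A : 'M[F]_n) : vintm v A -> sg (redcok_N v c A).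
Proof.
move=> hA; split.
  by exists 0, 0; split; try apply: vintv0; rewrite mul0mx scaler0 addr0.
move=> x y [a [b [ha hb ->]]] [a' [b' [ha' hb' ->]]].
exists (a - a'), (b - b'); split; try exact: vintvB.
by rewrite mulmxBl scalerBr opprD !addrA; congr (_ + _); rewrite addrAC.
Qed.

Lemma kercok (c : F) (A : 'M[F]_n) q : vint v c -> vintm v A ->
  quot_card (@vintv F v n) (multv v c) q ->
  exists k, quot_card (redker_S v c A) (multv v c) k /\
            quot_card (vintv v) (redcok_N v c A) k.
Proof.
move=> hc hA hq.
have [a1 [b1 [h1 h2 e1]]] := qc_split sg_vintv (sg_redker c A) (sg_multv c)
  (fun (x : 'rV[F]_n) (h : multv v c x) => conj (multv_vintv hc h) (multvM hA h))
  (fun (x : 'rV[F]_n) (h : redker_S v c A x) => h.1) hq.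
have i1 : forall x : 'rV[F]_n, multv v c x -> redcok_N v c A x.
  by move=> x [y hy ->]; exists 0, y; split => //; [apply: vintv0 | rewrite mul0mx add0r].
have i2 : forall x : 'rV[F]_n, redcok_N v c A x -> vintv v x.
  move=> x [a [b [ha hb ->]]]; apply: vintvD; first exact: vintvM.
  exact: vintvZ.
have [a2 [b2 [h3 h4 e2]]] := qc_split sg_vintv (sg_redcok c hA) (sg_multv c) i1 i2 hq.
have h5 : quot_card (redcok_N v c A) (multv v c) a1.
  apply: (qc_transfer (f := fun x => x *m A)) h1.
  + exact: sg_multv.
  + by move=> x hx; exists x, 0; split => //; [apply: vintv0 | rewrite scaler0 addr0].
  + move=> y [a [b [ha hb ->]]]; exists a; split => //.
    by exists b => //; rewrite addrC addKr.
  + move=> x x' hx hx'; rewrite -mulmxBl; split.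
      by move=> h; split => //; apply: vintvB.
    by case.
have eb : b2 = a1 by apply: qc_uniq (sg_multv c) h4 h5.
have a1p : (0 < a1)%N by apply: qc_pos h1 vintv0.
exists b1; split => //.
have : (a1 * b1 = a1 * a2)%N by rewrite e1 -e2 -eb mulnC.
by move/eqP; rewrite eqn_mul2l gtn_eqF //= => /eqP ->.
Qed.

Lemma lamcount (c c0 : F) (Lam : 'rV[F]_n -> Prop) q0 :
  c != 0 -> vint v c -> sg Lam -> (forall x, Lam x -> vintv v x) ->
  (forall y, Lam y -> Lam (c *: y)) ->
  (forall x, multv v c0 x -> Lam x) -> vint v c0 ->
  quot_card (@vintv F v n) (multv v c0) q0 ->
  exists m, quot_card (subker_S v c Lam) (subker_N c Lam) m /\
            quot_card (vintv v) (subcok_N v c Lam) m.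
Proof.
move=> c0' hc hL hLv hLc hc0L hc0 hq.
have [n1 [b0 [h1 _ _]]] := qc_split sg_vintv hL (sg_multv c0) hc0L hLv hq.
have sgN : sg (subker_N c Lam).
  split; first by exists 0; [case: hL | rewrite scaler0].
  move=> x y [a ha ->] [b hb ->]; exists (a - b); last by rewrite scalerBr.
  exact: hL.2.
have sgS : sg (subker_S v c Lam).
  split; first by split; [case: hL | case: (sg_multv c)].
  move=> x y [hx1 hx2] [hy1 hy2]; split; [exact: hL.2 | exact: (sg_multv c).2].
have sgC : sg (subcok_N v c Lam).
  split; first by exists 0, 0; split; [case: hL | apply: vintv0 | rewrite scaler0 addr0].
  move=> x y [a [b [ha hb ->]]] [a' [b' [ha' hb' ->]]].
  exists (a - a'), (b - b'); split; [exact: hL.2 | exact: vintvB |].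
  by rewrite scalerBr opprD !addrA; congr (_ + _); rewrite addrAC.
have h2 : quot_card (multv v c) (subker_N c Lam) n1.
  apply: (qc_transfer (f := fun x => c *: x)) h1 => //.
  - by move=> x hx; exists x.
  - move=> y [z hz ->]; exists z; split => //.
    by rewrite subrr; exists 0; [case: hL | rewrite scaler0].
  - move=> x x' hx hx'; split.
      move=> [y hy e]; rewrite -scalerBr in e.
      by have -> : x - x' = y by apply: (scalerI c0'); rewrite e.
    by move=> h; exists (x - x') => //; rewrite scalerBr.
have i1 : forall x : 'rV[F]_n, subker_N c Lam x -> subker_S v c Lam x.
  move=> x [y hy ->]; split; first exact: hLc.
  by exists y => //; apply: hLv.
have [B1 [X [h3 h4 e3]]] := qc_split (sg_multv c) sgS sgN i1
  (fun (x : 'rV[F]_n) (h : subker_S v c Lam x) => h.2) h2.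
have i2 : forall x : 'rV[F]_n, Lam x -> subcok_N v c Lam x.
  by move=> x hx; exists x, 0; split => //; [apply: vintv0 | rewrite scaler0 addr0].
have i3 : forall x : 'rV[F]_n, subcok_N v c Lam x -> vintv v x.
  move=> x [a [b [ha hb ->]]]; apply: vintvD; first exact: hLv.
  exact: vintvZ.
have [m [B2 [h5 h6 e4]]] := qc_split sg_vintv sgC hL i2 i3 h1.
have h7 : quot_card (subcok_N v c Lam) Lam B1.
  apply: (qc_transfer (f := id)) h3 => //.
  * by move=> x [z hz ->]; exists 0, z; split => //; [case: hL | rewrite add0r].
  * move=> y [a [b [ha hb ->]]]; exists (c *: b); split; first by exists b.
    by rewrite addrK.
  * move=> x x' hx hx'; split; last by case.
    by move=> h; split => //; apply: (sg_multv c).2.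
have eB : B2 = B1 by apply: qc_uniq hL h6 h7.
have Bp : (0 < B1)%N by apply: qc_pos h7 sgC.1.
exists X; split => //.
have : (B1 * X = B1 * m)%N by rewrite e3 -e4 eB mulnC.
by move/eqP; rewrite eqn_mul2l gtn_eqF //= => /eqP ->.
Qed.

End Vec.
End Val.
Unset Default Proof Using.

Lemma exists_min k (f : 'I_k -> int) (P : pred 'I_k) i0 : P i0 ->
  exists j, P j /\ forall i, P i -> f j <= f i.
Proof. by move=> h; case: (arg_minP f h) => j Pj hj; exists j. Qed.

Section Ext.
Variables (K : fieldType) (L : fieldExtType K) (vL : L -> int).
Hypothesis hL : local_field vL.
Hypothesis hK : local_field (fun a : K => vL (in_alg L a)).
Variable pi : K.
Hypothesis hpi : uniformizer (fun a : K => vL (in_alg L a)) pi.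

Local Notation vK := (fun a : K => vL (in_alg L a)).

Lemma vML : forall x y : L, x != 0 -> y != 0 -> vL (x * y) = vL x + vL y.
Proof. by case: hL. Qed.
Lemma vDL : forall x y : L, x != 0 -> y != 0 -> x + y != 0 ->
          Order.min (vL x) (vL y) <= vL (x + y).
Proof. by case: hL. Qed.
Lemma vMK : forall x y : K, x != 0 -> y != 0 -> vK (x * y) = vK x + vK y.
Proof. by case: hK. Qed.
Lemma vDK : forall x y : K, x != 0 -> y != 0 -> x + y != 0 ->
          Order.min (vK x) (vK y) <= vK (x + y).
Proof. by case: hK. Qed.

Lemma alg_eq0 (a : K) : (in_alg L a == 0) = (a == 0).
Proof. exact: fmorph_eq0. Qed.

Lemma vint_alg (a : K) : vint vK a -> vint vL (in_alg L a).
Proof. by case=> [->|h]; [left; rewrite rmorph0 | right]. Qed.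

Lemma vge_alg N (a : K) : vge vK N a -> vge vL N (in_alg L a).
Proof. by case=> [->|h]; [left; rewrite rmorph0 | right]. Qed.

Lemma vint_algE (a : K) : vint vL (in_alg L a) -> vint vK a.
Proof. by case=> [/eqP|h]; [rewrite alg_eq0 => /eqP ->; left | right]. Qed.

Lemma alg1 : in_alg L 1 = 1.
Proof. by rewrite /GRing.in_alg scale1r. Qed.

Definition lc k (a : 'I_k -> K) (b : 'I_k -> L) := \sum_i in_alg L (a i) * b i.

Lemma vint_lc k (a : 'I_k -> K) (b : 'I_k -> L) : (forall i, vint vK (a i)) ->
  (forall i, vint vL (b i)) -> vint vL (lc a b).
Proof.
move=> ha hb; apply: (vint_sum vML vDL) => i _.
by apply: (vintM vML vDL); [apply: vint_alg | apply: hb].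
Qed.

Let piA := in_alg L pi.

Lemma piK0 : pi != 0. Proof. by case: hpi. Qed.
Lemma vpiK : 0 < vK pi. Proof. by case: hpi. Qed.

Lemma cover_L : exists s : seq L, (forall y, y \in s -> vint vL y) /\
  forall x, vint vL x -> exists2 y, y \in s & smult vL piA (x - y).
Proof.
case: (hL) => _ _ hnt _ [R [hR1 hR2]].
have [P hP] := exists_unif vML vDL hnt.
have [s [hs1 hs2]] := cover_pi vML vDL hP hR1 hR2 `|vK pi|%N.
exists s; split => // x hx; have [y hy [z hz e]] := hs2 x hx.
exists y => //; exists ((x - y) / piA).
  apply: (vge_div vML vDL); first by rewrite alg_eq0 piK0.
  rewrite e; apply: (vge_le vML vDL _ (vge_pi vML vDL hP _ hz)).
  have := vpiK; rewrite /piA; lia.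
by rewrite mulrC divfK // alg_eq0 piK0.
Qed.

Definition span_mod k (b : 'I_k -> L) := (forall i, vint vL (b i)) /\
  forall x, vint vL x -> exists a : 'I_k -> K, (forall i, vint vK (a i)) /\
     smult vL piA (x - lc a b).

Lemma exists_span : exists k, exists b : 'I_k -> L, span_mod b.
Proof.
have [s [hs1 hs2]] := cover_L.
exists (size s), (fun i => nth 0 s i); split.
  by move=> i; apply: hs1; apply: mem_nth.
move=> x hx; have [y hy hxy] := hs2 x hx.
have hj : (index y s < size s)%N by rewrite index_mem.
pose j := Ordinal hj.
exists (fun i => if i == j then 1 else 0); split.
  move=> i; case: ifP => _; [right | by left].
  by rewrite /GRing.in_alg scale1r (v1 vML vDL).
suff -> : lc (fun i => if i == j then 1 else 0) (fun i => nth 0 s i) = y by [].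
rewrite /lc (bigD1 j) //= eqxx /GRing.in_alg scale1r mul1r big1 ?addr0 /=.
  by rewrite nth_index.
by move=> i /negbTE ->; rewrite scale0r mul0r.
Qed.

Lemma lc_lift k (a : 'I_k.+1 -> K) (b : 'I_k.+1 -> L) j :
  lc a b = in_alg L (a j) * b j +
     \sum_(i < k) in_alg L (a (lift j i)) * b (lift j i).
Proof. by rewrite /lc (bigD1_ord j). Qed.

Lemma drop_span k (b : 'I_k.+1 -> L) (a : 'I_k.+1 -> K) j :
  span_mod b -> (forall i, vint vK (a i)) -> smult vL piA (lc a b) ->
  vint vK (a j)^-1 -> a j != 0 -> span_mod (fun i : 'I_k => b (lift j i)).
Proof.
move=> [hb hsp] ha [u hu ea] haj aj0; split => [i|x hx]; first exact: hb.
have [c [hc [w hw ex]]] := hsp x hx.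
exists (fun i => c (lift j i) - c j * (a j)^-1 * a (lift j i)); split.
  move=> i; apply: (vintB vMK vDK); first exact: hc.
  by apply: (vintM vMK vDK); [apply: (vintM vMK vDK) | apply: ha].
exists (w + in_alg L (c j * (a j)^-1) * u).
  apply: (vintD vML vDL) => //; apply: (vintM vML vDL) => //.
  by apply: vint_alg; apply: (vintM vMK vDK).
have -> : lc (fun i => c (lift j i) - c j * (a j)^-1 * a (lift j i))
            (fun i => b (lift j i)) =
          \sum_(i < k) in_alg L (c (lift j i)) * b (lift j i) -
          in_alg L (c j * (a j)^-1) *
          \sum_(i < k) in_alg L (a (lift j i)) * b (lift j i).
  rewrite /lc mulr_sumr -sumrB; apply: eq_bigr => i _.
  by rewrite rmorphB rmorphM /= mulrBl mulrA.
move: ex ea; rewrite (lc_lift _ _ j) (lc_lift a b j).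
set Sc := \sum_(i < k) _; set Sa := \sum_(i < k) _.
move=> ex ea.
have -> : x = piA * w + (in_alg L (c j) * b j + Sc).
  by rewrite -ex subrK.
have -> : Sa = piA * u - in_alg L (a j) * b j by rewrite -ea addrAC subrr add0r.
have aj0' : in_alg L (a j) != 0 by rewrite alg_eq0.
rewrite rmorphM fmorphV /=.
by field.
Qed.

Lemma min_span : exists k, exists b : 'I_k -> L, span_mod b /\
  forall a : 'I_k -> K, (forall i, vint vK (a i)) -> smult vL piA (lc a b) ->
    forall i, smult vK pi (a i).
Proof.
have hex : exists k, asbool (exists b : 'I_k -> L, span_mod b).
  by have [k hk] := exists_span; exists k; apply/asboolP.
case: (ex_minnP hex) => k /asboolP [b hb] hmin.
exists k, b; split => // a ha hs i.
case: (pselect (smult vK pi (a i))) => // hni; exfalso.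
have ai0 : a i != 0.
  by apply/eqP => e; apply: hni; exists 0; [left | rewrite e mulr0].
have vai : vK (a i) = 0.
  case: (ha i) => [/eqP|h]; first by rewrite (negbTE ai0).
  case: (ltP 0 (vK (a i))) => h2; last by lia.
  exfalso; apply: hni; exists (a i / pi); last by rewrite mulrC divfK ?piK0.
  apply: (vge_div vMK vDK); first exact: piK0.
  by right; case: hpi => _ _; apply.
have hai : vint vK (a i)^-1.
  by right; rewrite (vV vMK vDK) // vai.
move: i b hb hmin a ha hs hni ai0 vai hai; case: k => [[]//|k] i b hb hmin a ha hs _ ai0 _ hai.
suff : (k.+1 <= k)%N by rewrite ltnn.
apply: hmin; apply/asboolP.
by exists (fun l => b (lift i l)); apply: drop_span hb ha hs hai ai0.
Qed.

Lemma lc_scale k (c : K) (a : 'I_k -> K) (b : 'I_k -> L) :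
  lc (fun i => c * a i) b = in_alg L c * lc a b.
Proof. by rewrite /lc mulr_sumr; apply: eq_bigr => i _; rewrite rmorphM mulrA. Qed.

Lemma lcD k (a a' : 'I_k -> K) (b : 'I_k -> L) :
  lc (fun i => a i + a' i) b = lc a b + lc a' b.
Proof. by rewrite /lc -big_split; apply: eq_bigr => i _; rewrite rmorphD mulrDl. Qed.

Lemma lcB k (a a' : 'I_k -> K) (b : 'I_k -> L) :
  lc (fun i => a i - a' i) b = lc a b - lc a' b.
Proof. by rewrite /lc -sumrB; apply: eq_bigr => i _; rewrite rmorphB mulrBl. Qed.

Lemma lc0 k (b : 'I_k -> L) : lc (fun _ => 0) b = 0.
Proof. by rewrite /lc big1 // => i _; rewrite rmorph0 mul0r. Qed.

Lemma vKX r : vK (pi ^+ r) = r%:Z * vK pi.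
Proof. exact: (vX vMK vDK hpi). Qed.

Section Basis.
Variables (k : nat) (b : 'I_k -> L).
Hypothesis hsp : span_mod b.
Hypothesis hind : forall a : 'I_k -> K, (forall i, vint vK (a i)) ->
  smult vL piA (lc a b) -> forall i, smult vK pi (a i).

Lemma IC a : vint vL (lc a b) -> forall i, vint vK (a i).
Proof.
move=> hx i0; case: (pselect (vint vK (a i0))) => // hn; exfalso.
have ai00 : a i0 != 0 by apply/eqP => e; apply: hn; left.
have [j [aj0 hj]] := exists_min (fun i => vK (a i)) (P := [pred i | a i != 0]) ai00.
have vaj : vK (a j) < 0.
  have := hj i0 ai00; case: (ltP (vK (a i0)) 0) => h; first by lia.
  by exfalso; apply: hn; right.
have aj0' : a j != 0 by [].
pose a' i := a i / a j.
have ha' : forall i, vint vK (a' i).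
  move=> i; rewrite /a'; have [e|ai0] := eqVneq (a i) 0; first by left; rewrite e mul0r.
  right; rewrite (vMK ai0) ?invr_neq0 // (vV vMK vDK) //.
  by have := hj i ai0; lia.
have [e he eaj] : exists2 e, vint vK e & (a j)^-1 = pi * e.
  exists ((a j)^-1 / pi); last by rewrite mulrC divfK ?piK0.
  apply: (vge_div vMK vDK); first exact: piK0.
  right; case: hpi => _ _; apply; first by rewrite invr_neq0.
  by rewrite (vV vMK vDK) //; lia.
have hs : smult vL piA (lc a' b).
  exists (in_alg L e * lc a b).
    by apply: (vintM vML vDL) => //; apply: vint_alg.
  have -> : lc a' b = in_alg L (a j)^-1 * lc a b.
    by rewrite -lc_scale /lc; apply: eq_bigr => i _; rewrite /a' [_ / _]mulrC.
  by rewrite eaj rmorphM mulrA.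
have := hind ha' hs j; rewrite /a' divff // => -[z hz ez].
have e2 : z = pi^-1 by apply: (mulfI piK0); rewrite -ez divff ?piK0.
case: hz => [e0|]; first by move: (piK0); rewrite -invr_eq0 -e2 e0 eqxx.
by rewrite e2 (vV vMK vDK) ?piK0 //; have := vpiK; lia.
Qed.

Lemma INJ a : lc a b = 0 -> forall i, a i = 0.
Proof.
move=> h0 j; case: (eqVneq (a j) 0) => // aj0; exfalso.
pose a'' i := (pi * a j)^-1 * a i.
have pa0 : pi * a j != 0 by rewrite mulf_neq0 // piK0.
have : vint vL (lc a'' b).
  by rewrite lc_scale h0 mulr0; left.
move/IC => /(_ j); rewrite /a'' invfM -mulrA mulVf // mulr1.
case=> [/eqP|h]; first by rewrite invr_eq0 (negbTE piK0).
by move: h; rewrite (vV vMK vDK) ?piK0 //; have := vpiK; lia.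
Qed.

Lemma exact_span x : vint vL x -> exists a, (forall i, vint vK (a i)) /\ x = lc a b.
Proof.
move=> hx.
have hG : forall y : L, exists p : ('I_k -> K) * L, vint vL y ->
    [/\ forall i, vint vK (p.1 i), vint vL p.2 & y - lc p.1 b = piA * p.2].
  move=> y; case: (pselect (vint vL y)) => hy; last by exists (fun=> 0, 0).
  by have [a [ha [w hw e]]] := hsp.2 y hy; exists (a, w).
case: (choice hG) => G hG'.
pose xs t := iter t (fun y => (G y).2) x.
have hxs : forall t, vint vL (xs t).
  by elim=> [|t IH] //=; have [] := hG' _ IH.
pose A t := (G (xs t)).1.
have hA : forall t i, vint vK (A t i).
  by move=> t i; have [h _ _] := hG' _ (hxs t); apply: h.
pose u t i := \sum_(s < t) pi ^+ s * A s i.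
have hui : forall t i, vint vK (u t i).
  move=> t i; apply: (vint_sum vMK vDK) => s _; apply: (vintM vMK vDK) => //.
  by apply: (vint_exp vMK vDK); right; apply/ltW/vpiK.
have inv : forall t, x = lc (u t) b + in_alg L (pi ^+ t) * xs t.
  elim=> [|t IH].
    have -> : lc (u 0%N) b = 0.
      by rewrite /lc big1 // => i _; rewrite /u big_ord0 rmorph0 mul0r.
    by rewrite add0r expr0 alg1 mul1r.
  have [_ _ e] := hG' _ (hxs t).
  have -> : lc (u t.+1) b = lc (u t) b + in_alg L (pi ^+ t) * lc (A t) b.
    rewrite -lc_scale -lcD /lc; apply: eq_bigr => i _.
    by rewrite /u big_ord_recr.
  rewrite IH -addrA; congr (_ + _).
  have -> : xs t = lc (A t) b + piA * xs t.+1 by rewrite -e addrC subrK.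
  by rewrite mulrDr exprSr rmorphM /= mulrA.
have hu : forall i (M m : nat), (M <= m)%N -> vge vK M%:Z (u m i - u M i).
  move=> i M m hMm; rewrite /u -!(big_mkord xpredT (fun s => pi ^+ s * A s i)).
  rewrite (big_cat_nat (leq0n M) hMm) /= addrC addrK big_nat_cond.
  apply: (vge_sum vMK vDK) => s /andP [/andP [hs _] _].
  apply: (vge_le vMK vDK _ (vge_pi vMK vDK hpi _ (hA s i))); lia.
have hcv : forall i, exists l, forall N, exists M, forall m, (M <= m)%N ->
    vclose vK N (u m i) l.
  move=> i; case: (hK) => _ _ _ hc _; apply: hc => N.
  exists `|N|%N => m m' hm hm'.
  have h := (vgeB vMK vDK (hu i _ _ hm) (hu i _ _ hm')).
  rewrite opprB addrA subrK in h.
  have [e|ne] := eqVneq (u m i) (u m' i); first by left.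
  right; split => //; case: h => [/eqP|h]; first by rewrite subr_eq0 (negbTE ne).
  by apply: le_trans h; rewrite abszE ler_norm.
case: (choice hcv) => l hl.
have hlint : forall i, vint vK (l i).
  move=> i; have [M hM] := hl i 0; case: (hM M (leqnn M)) => [<-|[_ h]].
    exact: hui.
  have -> : l i = u M i - (u M i - l i) by rewrite opprB addrC subrK.
  by apply: (vintB vMK vDK) => //; right.
exists l; split => //; apply/eqP; rewrite -subr_eq0; apply/eqP.
apply: (vge_all vML vDL) => N.
have hM : forall i, exists M, forall m, (M <= m)%N -> vclose vK N (u m i) (l i).
  by move=> i; apply: hl.
case: (choice hM) => Mf hMf.
pose t := maxn `|N|%N (\max_i Mf i).
have -> : x - lc l b = lc (fun i => u t i - l i) b + in_alg L (pi ^+ t) * xs t.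
  by rewrite lcB (inv t) addrAC.
apply: (vgeD vML vDL).
  apply: (vge_sum vML vDL) => i _.
  rewrite -[N]addr0; apply: (vgeM vML vDL); last exact: hsp.1.
  apply: vge_alg; case: (hMf i t _) => [|e|[_ h]].
  - by rewrite /t (leq_trans _ (leq_maxr _ _)) // (leq_bigmax i).
  - by rewrite e subrr; left.
  - by right.
rewrite -[N]addr0; apply: (vgeM vML vDL); last exact: hxs.
have := vge_pi vMK vDK hpi t (vint1 vMK vDK); rewrite mulr1 => /vge_alg.
by apply: (vge_le vML vDL); rewrite /t; lia.
Qed.

Lemma all_span x : exists a, x = lc a b.
Proof.
pose s := `|vL x|%N.
have hy : vint vL (in_alg L (pi ^+ s) * x).
  have [->|x0] := eqVneq x 0; first by rewrite mulr0; left.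
  right; rewrite (vML _ x0) ?alg_eq0 ?expf_neq0 ?piK0 //.
  have hab : - vL x <= (`|vL x|%N)%:Z by rewrite abszE -normrN ler_norm.
  have := vKX s; rewrite /= => ->; have := vpiK; rewrite /s => hp.
  have hp' : 0 < vL (pi%:A) := hp; move: hab hp'.
  move: (vL x) (vL pi%:A) => a p ha hp2; have h0 : (0 <= (`|a|%N)%:Z) by []; nia.
have [a [_ ea]] := exact_span hy.
exists (fun i => (pi ^+ s)^-1 * a i).
rewrite lc_scale -ea mulrA -rmorphM mulVf ?expf_neq0 ?piK0 //.
by rewrite rmorph1 mul1r.
Qed.

End Basis.

Section Vecs.
Variables (k : nat) (b : 'I_k -> L).
Hypothesis hb : forall i, vint vL (b i).
Hypothesis hIC : forall a, vint vL (lc a b) -> forall i, vint vK (a i).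
Hypothesis hINJ : forall a, lc a b = 0 -> forall i, a i = 0.
Hypothesis hSP : forall x, exists a, x = lc a b.

Lemma dim_k : \dim (fullv : {vspace L}) = k.
Proof.
pose X := [tuple b i | i < k].
have hX : forall i : 'I_k, X`_i = b i by move=> i; rewrite nth_mktuple.
apply: (size_basis (X := X)); rewrite /basis_of; apply/andP; split.
  rewrite eqEsubv subvf /=; apply/subvP => x _; have [a ->] := hSP x.
  rewrite /lc; apply: memv_suml => i _; rewrite mulr_algl; apply: memvZ.
  by apply: memv_span; rewrite -tnth_mktuple mem_tnth.
apply/freeP => c hc i; apply: hINJ.
by rewrite -hc /lc; apply: eq_bigr => j _; rewrite hX mulr_algl.
Qed.

Variable n : nat.
Implicit Types g : {ffun 'I_k -> 'rV[K]_n}.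

Definition fv (g : {ffun 'I_k -> 'rV[K]_n}) : 'rV[L]_n :=
  \row_j lc (fun i => g i 0 j) b.

Lemma fv_int g : vintv vL (fv g) <-> forall i, vintv vK (g i).
Proof.
split.
  by move=> h i j; have := h j; rewrite mxE => /hIC; apply.
by move=> h j; rewrite mxE; apply: vint_lc => // i; apply: h.
Qed.

Lemma fvB g g' : fv (g - g') = fv g - fv g'.
Proof.
apply/rowP => j; rewrite !mxE -lcB /lc; apply: eq_bigr => i _.
by rewrite !ffunE !mxE.
Qed.

Lemma fvD g g' : fv (g + g') = fv g + fv g'.
Proof.
apply/rowP => j; rewrite !mxE -lcD /lc; apply: eq_bigr => i _.
by rewrite !ffunE mxE.
Qed.

Lemma fv_inj g g' : fv g = fv g' -> forall i, g i = g' i.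
Proof.
move=> e i; apply/eqP; rewrite -subr_eq0 -ffunB; apply/eqP/rowP => j.
have : fv (g - g') 0 j = 0 by rewrite fvB e subrr mxE.
rewrite mxE => /hINJ /(_ i) ->; by rewrite mxE.
Qed.

Lemma fv_surj y : exists g, fv g = y.
Proof.
have h : forall j : 'I_n, exists a, y 0 j = lc a b by move=> j; apply: hSP.
case: (choice h) => G hG.
exists [ffun i => \row_j G j i]; apply/rowP => j; rewrite mxE hG.
by rewrite /lc; apply: eq_bigr => i _; rewrite ffunE mxE.
Qed.

Lemma fvM g (T : 'M[K]_n) :
  fv [ffun i => g i *m T] = fv g *m map_mx (in_alg L) T.
Proof.
apply/rowP => j; rewrite !mxE /lc.
under eq_bigr => i _ do rewrite ffunE mxE rmorph_sum mulr_suml.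
rewrite exchange_big /=; apply: eq_bigr => l _.
rewrite !mxE mulr_suml; apply: eq_bigr => i _.
by rewrite mulrAC -rmorphM.
Qed.

Lemma fvZ g (c : K) : fv [ffun i => c *: g i] = in_alg L c *: fv g.
Proof.
apply/rowP => j; rewrite !mxE -lc_scale /lc; apply: eq_bigr => i _.
by rewrite ffunE mxE.
Qed.

Lemma btrans (SK NK : 'rV[K]_n -> Prop) (SL NL : 'rV[L]_n -> Prop) m :
  sg NK -> sg NL -> (forall g, SL (fv g) <-> forall i, SK (g i)) ->
  (forall g, NL (fv g) <-> forall i, NK (g i)) ->
  quot_card SK NK m -> quot_card SL NL (m ^ k).
Proof.
move=> hNK hNL hS hN hm; have := qc_ffun k hNK hm.
apply: (qc_transfer (f := fv)) => //.
- by move=> g hg; apply/hS.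
- move=> y hy; have [g eg] := fv_surj y; exists g; split.
    by apply/hS; rewrite eg.
  by rewrite eg subrr; case: hNL.
- move=> g g' _ _; rewrite -fvB hN; split => h i; have := h i; by rewrite ffunB.
Qed.

Lemma multvE (F : fieldType) (v : F -> int) (c : F) (x : 'rV[F]_n) :
  c != 0 -> multv v c x <-> vintv v (c^-1 *: x).
Proof.
move=> c0; split; first by move=> [y hy ->]; rewrite scalerA mulVf // scale1r.
by move=> h; exists (c^-1 *: x) => //; rewrite scalerA divff // scale1r.
Qed.

Lemma fv_multv (c : K) g : c != 0 ->
  multv vL (in_alg L c) (fv g) <-> forall i, multv vK c (g i).
Proof.
move=> c0; rewrite multvE ?alg_eq0 // -fmorphV -fvZ fv_int.
by split => h i; have := h i; rewrite ffunE multvE.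
Qed.

Lemma fv_redker (c : K) (T : 'M[K]_n) g : c != 0 ->
  redker_S vL (in_alg L c) (map_mx (in_alg L) T) (fv g) <->
  forall i, redker_S vK c T (g i).
Proof.
move=> c0; rewrite /redker_S -fvM fv_multv // fv_int.
split; first by move=> [h1 h2] i; split; [apply: h1 | have := h2 i; rewrite ffunE].
by move=> h; split => i; [case: (h i) | rewrite ffunE; case: (h i)].
Qed.

Lemma fv_redcok (c : K) (T : 'M[K]_n) g : vintm vK T ->
  redcok_N vL (in_alg L c) (map_mx (in_alg L) T) (fv g) <->
  forall i, redcok_N vK c T (g i).
Proof.
move=> hT; split.
  move=> [y [z [hy hz e]]]; have [Y eY] := fv_surj y; have [Z eZ] := fv_surj z.
  move: hy hz; rewrite -eY -eZ !fv_int => hY hZ.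
  have : fv g = fv ([ffun i => Y i *m T] + [ffun i => c *: Z i]).
    by rewrite fvD fvM fvZ e eY eZ.
  move/fv_inj => h i; exists (Y i), (Z i); split => //.
  by rewrite h !ffunE.
move=> h.
have h' : forall i, exists p : 'rV[K]_n * 'rV[K]_n,
    [/\ vintv vK p.1, vintv vK p.2 & g i = p.1 *m T + c *: p.2].
  by move=> i; have [y [z [hy hz e]]] := h i; exists (y, z).
case: (choice h') => P hP.
pose Y := [ffun i => (P i).1]; pose Z := [ffun i => (P i).2].
have eg : g = [ffun i => Y i *m T] + [ffun i => c *: Z i].
  by apply/ffunP => i; rewrite !ffunE; have [_ _ ->] := hP i.
exists (fv Y), (fv Z); split.
- by apply/fv_int => i; rewrite ffunE; have [] := hP i.
- by apply/fv_int => i; rewrite ffunE; have [] := hP i.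
- by rewrite eg fvD fvM fvZ.
Qed.

End Vecs.


Lemma Kcount (n j : nat) : exists q, quot_card (@vintv K vK n) (multv vK (pi ^+ j)) q.
Proof.
case: (hK) => _ _ _ _ [R [hR1 hR2]].
have [s [hs1 hs2]] := cover_pi vMK vDK hpi hR1 hR2 j.
have [q hq] := qc_cover (sg_smult vMK vDK (pi ^+ j)) hs1 hs2.
exists (q ^ n)%N; apply: (vec_count vMK vDK n) hq.
by rewrite expf_neq0 // piK0.
Qed.

Lemma mapB n (x y : 'rV[K]_n) :
  map_mx (in_alg L) (x - y) = map_mx (in_alg L) x - map_mx (in_alg L) y.
Proof. by apply/rowP => j; rewrite !mxE rmorphB. Qed.

Lemma mapZ n (c : K) (x : 'rV[K]_n) :
  map_mx (in_alg L) (c *: x) = in_alg L c *: map_mx (in_alg L) x.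
Proof. by apply/rowP => j; rewrite !mxE rmorphM. Qed.

Lemma map_vint n (x : 'rV[K]_n) : vintv vK x -> vintv vL (map_mx (in_alg L) x).
Proof. by move=> h j; rewrite mxE; apply: vint_alg. Qed.

Lemma main_Ext (r n : nat) :
  let cK := pi ^+ r in
  let cL := in_alg L (pi ^+ r) in
  let d := (\dim (fullv : {vspace L}))%N in
  (forall T : 'M[K]_n, vintm vK T ->
     (forall x : 'rV[K]_n, vintv vK x -> x *m T = 0 -> x = 0) ->
     exists m : nat,
       [/\ quot_card (redker_S vL cL (map_mx (in_alg L) T)) (multv vL cL) (m ^ d),
           quot_card (vintv vL) (redcok_N vL cL (map_mx (in_alg L) T)) (m ^ d),
           quot_card (redker_S vK cK T) (multv vK cK) m &
           quot_card (vintv vK) (redcok_N vK cK T) m]) /\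
  (forall U : 'M[L]_n, vintm vL U ->
     (forall y : 'rV[L]_n, vintv vL y -> y *m U = 0 -> y = 0) ->
     let Lam := fun x : 'rV[K]_n =>
       vintv vK x /\ exists2 y : 'rV[L]_n, vintv vL y & map_mx (in_alg L) x = y *m U in
     exists k m : nat,
       [/\ quot_card (redker_S vL cL U) (multv vL cL) k,
           quot_card (vintv vL) (redcok_N vL cL U) k,
           quot_card (subker_S vK cK Lam) (subker_N cK Lam) m,
           quot_card (vintv vK) (subcok_N vK cK Lam) m &
           (k <= m ^ d)%N]).
Proof.
move=> cK cL d.
have [k [b [hsp hind]]] := min_span.
have hb := hsp.1.
have hIC := IC hind.
have hINJ := INJ hind.
have hSP := all_span hsp.
have hd : d = k by rewrite /d (dim_k hINJ hSP).
have cK0 : cK != 0 by rewrite expf_neq0 // piK0.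
have cKi : vint vK cK by apply: (vint_exp vMK vDK); right; apply/ltW/vpiK.
have cLi : vint vL cL by apply: vint_alg.
have [q hq0] := Kcount n r.
have hq : quot_card (@vintv K vK n) (multv vK cK) q := hq0.
rewrite hd; split.
  move=> T hT _.
  have [m [hm1 hm2]] := kercok vMK vDK cKi hT hq.
  exists m; split => //.
  - apply: (btrans hSP (sg_multv vMK vDK n cK) (sg_multv vML vDL n cL) _ _ hm1).
      by move=> g; apply: fv_redker.
    by move=> g; apply: fv_multv.
  - apply: (btrans hSP (sg_redcok vMK vDK cK hT) (sg_redcok vML vDL cL _) _ _ hm2).
    + by move=> i j; rewrite mxE; apply: vint_alg.
    + by move=> g; apply: fv_int.
    + by move=> g; apply: fv_redcok.
move=> U hU hinj Lam.
have hqL : quot_card (@vintv L vL n) (multv vL cL) (q ^ k).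
  apply: (btrans hSP (sg_multv vMK vDK n cK) (sg_multv vML vDL n cL) _ _ hq).
    by move=> g; apply: fv_int.
  by move=> g; apply: fv_multv.
have [k0 [hk1 hk2]] := kercok vML vDL cLi hU hqL.
have sgL : sg Lam.
  split.
    split; first exact: (vintv0 vMK vDK).
    exists 0; first exact: (vintv0 vML vDL).
    by rewrite mul0mx; apply/rowP => j; rewrite !mxE rmorph0.
  move=> x x' [hx [y hy ey]] [hx' [y' hy' ey']]; split.
    exact: (vintvB vMK vDK).
  exists (y - y'); first exact: (vintvB vML vDL).
  by rewrite mapB ey ey' mulmxBl.
have hLv : forall x, Lam x -> vintv vK x by move=> x [].
have hLc : forall y, Lam y -> Lam (cK *: y).
  move=> y [hy [z hz ez]]; split; first exact: (vintvZ vMK vDK).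
  exists (cL *: z); first exact: (vintvZ vML vDL).
  by rewrite mapZ ez scalemxAl.
have hdet : \det U != 0.
  apply/negP => /det0P [y y0 hy].
  pose s := (\sum_(j < n) `|vL (y 0%R j)|)%N.
  pose e := in_alg L (pi ^+ s).
  have e0 : e != 0 by rewrite alg_eq0 expf_neq0 // piK0.
  have : e *: y = 0.
    apply: hinj; last by rewrite -scalemxAl hy scaler0.
    move=> j; rewrite mxE; have [->|yj0] := eqVneq (y 0 j) 0; first by rewrite mulr0; left.
    right; rewrite (vML e0 yj0).
    have hs : (`|vL (y 0%R j)| <= s)%N by rewrite /s (bigD1 j) //= leq_addr.
    have := vKX s; rewrite /= => he; rewrite /e he.
    have hab : - vL (y 0 j) <= (`|vL (y 0%R j)|%N)%:Z by rewrite abszE -normrN ler_norm.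
    have hp : 0 < vL (pi%:A) := vpiK.
    move: hab hp hs; move: (vL (y 0 j)) (vL pi%:A) => a p ha hp2 hs.
    have h0 : (0 <= (`|a|%N)%:Z) by [].
    have h3 : ((`|a|%N)%:Z <= s%:Z) by rewrite lez_nat.
    nia.
  by move/eqP; rewrite scaler_eq0 (negbTE e0) (negbTE y0).
pose N := `|vL (\det U)|%N.
have hc0 : forall x, multv vK (pi ^+ N) x -> Lam x.
  move=> x [z hz ->]; split.
    by apply: (vintvZ vMK vDK) => //; apply: (vint_exp vMK vDK); right; apply/ltW/vpiK.
  exists ((in_alg L (pi ^+ N) / \det U) *: (map_mx (in_alg L) z *m \adj U)).
    apply: (vintvZ vML vDL).
      apply: (vge_div vML vDL hdet); right.
      have := vKX N; rewrite /= => ->.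
      have hab : vL (\det U) <= (`|vL (\det U)|%N)%:Z by rewrite abszE ler_norm.
      have hp : 0 < vL (pi%:A) := vpiK.
      move: hab hp; rewrite /N; move: (vL (\det U)) (vL pi%:A) => a p ha hp2.
      have h0 : (0 <= (`|a|%N)%:Z) by [].
      nia.
    apply: (vintvM vML vDL); first exact: map_vint.
    by apply: (vint_adj vML vDL).
  rewrite -scalemxAl -mulmxA mul_adj_mx mul_mx_scalar scalerA divfK //.
  by rewrite mapZ.
have [qN hqN] := Kcount n N.
have c0i : vint vK (pi ^+ N) by apply: (vint_exp vMK vDK); right; apply/ltW/vpiK.
have [m [hm1 hm2]] := lamcount vMK vDK cK0 cKi sgL hLv hLc hc0 c0i hqN.
exists k0, m; split => //.
have sgC : sg (subcok_N vK cK Lam).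
  split; first by exists 0, 0; split; [case: sgL | apply: (vintv0 vMK vDK) | rewrite scaler0 addr0].
  move=> x y [a [a2 [ha hb2 ->]]] [a' [b' [ha' hb' ->]]].
  exists (a - a'), (a2 - b'); split; [exact: sgL.2 | exact: (vintvB vMK vDK) |].
  by rewrite scalerBr opprD !addrA; congr (_ + _); rewrite addrAC.
pose N' := fun x : 'rV[L]_n => exists2 g, x = fv b g & forall i, subcok_N vK cK Lam (g i).
have sgN' : sg N'.
  split.
    exists 0; last by move=> i; rewrite ffunE; case: sgC.
    by apply/rowP => j; rewrite !mxE /lc big1 // => i _; rewrite !ffunE mxE rmorph0 mul0r.
  move=> x y [g -> hg] [g' -> hg']; exists (g - g'); first by rewrite fvB.
  by move=> i; rewrite !ffunE; apply: sgC.2; [apply: hg | apply: hg'].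
have h1 : quot_card (vintv vL) N' (m ^ k).
  apply: (btrans hSP sgC sgN' _ _ hm2); first by move=> g; apply: fv_int.
  move=> g; split; last by move=> h; exists g.
  by move=> [g' eg hg'] i; rewrite (fv_inj hINJ eg).
apply: (qc_le sgN' _ h1 hk2).
move=> x [g -> hg].
have h' : forall i, exists p : 'rV[K]_n * 'rV[K]_n * 'rV[L]_n,
    [/\ vintv vK p.1.2, vintv vL p.2, map_mx (in_alg L) p.1.1 = p.2 *m U &
        g i = p.1.1 + cK *: p.1.2].
  move=> i; have [l [z [[hl1 [y hy ey]] hz e]]] := hg i.
  by exists (l, z, y).
case: (choice h') => P hP.
pose Y := \sum_i b i *: (P i).2.
pose Z := [ffun i => (P i).1.2].
pose Lm := [ffun i => (P i).1.1].
exists Y, (fv b Z); split.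
- move=> j; rewrite summxE; apply: (vint_sum vML vDL) => i _.
  rewrite mxE; apply: (vintM vML vDL); first exact: hb.
  by have [_ h _ _] := hP i; apply: h.
- by apply/fv_int => // i; rewrite ffunE; have [] := hP i.
- have eg : g = Lm + [ffun i => cK *: Z i].
    by apply/ffunP => i; rewrite !ffunE; have [_ _ _ ->] := hP i.
  rewrite eg fvD fvZ; congr (_ + _).
  rewrite /Y mulmx_suml; apply/rowP => j; rewrite summxE mxE /lc.
  apply: eq_bigr => i _.
  rewrite ffunE -scalemxAl mxE; have [_ _ <- _] := hP i.
  by rewrite mxE mulrC.
Qed.

End Ext.

Theorem lemma7p2 (K : fieldType) (L : fieldExtType K) (vL : L -> int)
  (hL : local_field vL) (hK : local_field (fun a : K => vL (in_alg L a)))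
  (pi : K) (hpi : uniformizer (fun a : K => vL (in_alg L a)) pi) (r n : nat) :
  let vK := fun a : K => vL (in_alg L a) in
  let cK := pi ^+ r in
  let cL := in_alg L (pi ^+ r) in
  let d := (\dim (fullv : {vspace L}))%N in
  (* (i) *)
  (forall T : 'M[K]_n, vintm vK T ->
     (forall x : 'rV[K]_n, vintv vK x -> x *m T = 0 -> x = 0) ->
     exists m : nat,
       [/\ quot_card (redker_S vL cL (map_mx (in_alg L) T)) (multv vL cL) (m ^ d),
           quot_card (vintv vL) (redcok_N vL cL (map_mx (in_alg L) T)) (m ^ d),
           quot_card (redker_S vK cK T) (multv vK cK) m &
           quot_card (vintv vK) (redcok_N vK cK T) m]) /\
  (* (ii) *)
  (forall U : 'M[L]_n, vintm vL U ->
     (forall y : 'rV[L]_n, vintv vL y -> y *m U = 0 -> y = 0) ->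
     let Lam := fun x : 'rV[K]_n =>
       vintv vK x /\ exists2 y : 'rV[L]_n, vintv vL y & map_mx (in_alg L) x = y *m U in
     exists k m : nat,
       [/\ quot_card (redker_S vL cL U) (multv vL cL) k,
           quot_card (vintv vL) (redcok_N vL cL U) k,
           quot_card (subker_S vK cK Lam) (subker_N cK Lam) m,
           quot_card (vintv vK) (subcok_N vK cK Lam) m &
           (k <= m ^ d)%N]).
Proof. exact: (main_Ext hL hK hpi r n). Qed.
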